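(* Let $T$ be a complete classical theory in a countable language. Then $\mathbf{G}_0(T)$ is a Polish open topological groupoid with base $\mathbf{B}_0(T)$, and if $g=\mathrm{tp}(a,b)\in\mathbf{G}_0(T)$ then $t_g=\mathrm{tp}(a)$ and $s_g=\mathrm{tp}(b)$.
   Context: $\mathbf{G}_0(T)\subseteq S_{2\times\mathbb{N}}(T)$ (the space of types of pairs of $\mathbb{N}$-indexed sequences, logic topology, subspace topology on $\mathbf{G}_0$) is the set of types $\mathrm{tp}(a,b)$ where $a$ and $b$ are both enumerations of the same countable model $M\models T$ (sequences whose set of entries is exactly $M$). $\mathbf{B}_0(T)$ is the subset defined by $x=y$, i.e. the types $\mathrm{tp}(a,a)$, identified with $\mathrm{tp}(a)$. Composition: $\mathrm{tp}(a,b)\cdot\mathrm{tp}(b,c)=\mathrm{tp}(a,c)$ (defined when the middle types agree), inverse $\mathrm{tp}(a,b)^{-1}=\mathrm{tp}(b,a)$; $s_g=g^{-1}g$, $t_g=gg^{-1}$. A topological groupoid is open if its source map is open onto the base. *)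

(* Defs.v *)
From Stdlib Require Import Reals.
From mathcomp Require Import ssreflect ssrfun ssrbool eqtype ssrnat fintype.
Unset Implicit Arguments.
Unset Strict Implicit.

Record language := Language {
  fsym : Type; far : fsym -> nat;
  rsym : Type; rar : rsym -> nat }.
Arguments far {l}.
Arguments rar {l}.

Definition countable_language (L : language) : Prop :=
  (exists e : fsym L -> nat, injective e) /\ (exists e : rsym L -> nat, injective e).

Inductive term (L : language) : Type :=
  | tvar : nat -> term L
  | tapp : forall f : fsym L, ('I_(far f) -> term L) -> term L.

Inductive formula (L : language) : Type :=
  | fequ : term L -> term L -> formula L
  | frel : forall r : rsym L, ('I_(rar r) -> term L) -> formula L
  | fneg : formula L -> formula L
  | fand : formula L -> formula L -> formula L
  | fex  : nat -> formula L -> formula L.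

Arguments tvar {L}.
Arguments tapp {L}.
Arguments fequ {L}.
Arguments frel {L}.
Arguments fneg {L}.
Arguments fand {L}.
Arguments fex {L}.

Record structure (L : language) := Structure {
  dom :> Type;
  dom_inh : dom;
  fint : forall f : fsym L, ('I_(far f) -> dom) -> dom;
  rint : forall r : rsym L, ('I_(rar r) -> dom) -> Prop }.
Arguments dom {L}.
Arguments fint {L}.
Arguments rint {L}.

Fixpoint teval {L : language} (M : structure L) (v : nat -> M) (t : term L) : M :=
  match t with
  | tvar n => v n
  | tapp f args => fint M f (fun i => teval M v (args i))
  end.

Definition upd {A : Type} (v : nat -> A) (n : nat) (m : A) : nat -> A :=
  fun k => if k == n then m else v k.

Fixpoint sat {L : language} (M : structure L) (v : nat -> M) (phi : formula L) : Prop :=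
  match phi with
  | fequ t1 t2 => teval M v t1 = teval M v t2
  | frel r args => rint M r (fun i => teval M v (args i))
  | fneg psi => ~ sat M v psi
  | fand psi chi => sat M v psi /\ sat M v chi
  | fex n psi => exists m : M, sat M (upd v n m) psi
  end.

Fixpoint tfree {L : language} (n : nat) (t : term L) : Prop :=
  match t with
  | tvar k => k = n
  | tapp f args => exists i, tfree n (args i)
  end.

Fixpoint ffree {L : language} (n : nat) (phi : formula L) : Prop :=
  match phi with
  | fequ t1 t2 => tfree n t1 \/ tfree n t2
  | frel r args => exists i, tfree n (args i)
  | fneg psi => ffree n psi
  | fand psi chi => ffree n psi \/ ffree n chi
  | fex k psi => k <> n /\ ffree n psi
  end.

Definition sentence {L : language} (phi : formula L) : Prop := forall n, ~ ffree n phi.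

Definition theory (L : language) := formula L -> Prop.

Definition is_model {L : language} (M : structure L) (T : theory L) : Prop :=
  forall phi, T phi -> forall v : nat -> M, sat M v phi.

Definition complete_theory {L : language} (T : theory L) : Prop :=
  (forall phi, T phi -> sentence phi) /\
  (exists M : structure L, is_model M T) /\
  (forall phi, sentence phi ->
     (forall M : structure L, is_model M T -> forall v : nat -> M, sat M v phi) \/
     (forall M : structure L, is_model M T -> forall v : nat -> M, ~ sat M v phi)).

(** Types are sets of formulas; the variables x_i, y_i are coded as
    the variables 2i and 2i+1. *)
Definition ftype (L : language) := formula L -> Prop.

Definition pairseq {A : Type} (a b : nat -> A) : nat -> A :=
  fun n => if odd n then b n./2 else a n./2.

Definition tp2 {L : language} (M : structure L) (a b : nat -> M) : ftype L :=
  fun phi => sat M (pairseq a b) phi.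

Definition enumeration {A : Type} (a : nat -> A) : Prop := forall m : A, exists i, a i = m.

Definition G0 {L : language} (T : theory L) (p : ftype L) : Prop :=
  exists (M : structure L) (a b : nat -> M),
    is_model M T /\ enumeration a /\ enumeration b /\ p = tp2 M a b.

Definition B0 {L : language} (T : theory L) (p : ftype L) : Prop :=
  G0 T p /\ forall i, p (fequ (tvar i.*2) (tvar i.*2.+1)).

Section Topology.
Context {L : language}.
Notation X := (ftype L).

(** U is open in the subspace S of the type space: union of basic sets [phi] ∩ S *)
Definition lopen (S U : X -> Prop) : Prop :=
  (forall p, U p -> S p) /\
  (forall p, U p -> exists phi, p phi /\ forall q, S q -> q phi -> U q).

Definition lopen2 (D W : X -> X -> Prop) : Prop :=
  (forall p q, W p q -> D p q) /\
  (forall p q, W p q -> exists phi psi, p phi /\ q psi /\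
      forall p' q', D p' q' -> p' phi -> q' psi -> W p' q').

Definition continuous_on (S S' : X -> Prop) (f : X -> X) : Prop :=
  (forall p, S p -> S' (f p)) /\
  (forall U, lopen S' U -> lopen S (fun p => S p /\ U (f p))).

Local Open Scope R_scope.

Definition metric_on (S : X -> Prop) (d : X -> X -> R) : Prop :=
  (forall p q, S p -> S q -> 0 <= d p q) /\
  (forall p q, S p -> S q -> (d p q = 0 <-> p = q)) /\
  (forall p q, S p -> S q -> d p q = d q p) /\
  (forall p q r, S p -> S q -> S r -> d p r <= d p q + d q r).

Definition metric_open (S : X -> Prop) (d : X -> X -> R) (U : X -> Prop) : Prop :=
  (forall p, U p -> S p) /\
  (forall p, U p -> exists e, 0 < e /\ forall q, S q -> d p q < e -> U q).

Definition cauchy (d : X -> X -> R) (x : nat -> X) : Prop :=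
  forall e, 0 < e -> exists N, forall m n, (N <= m)%N -> (N <= n)%N -> d (x m) (x n) < e.

Definition converges_to (d : X -> X -> R) (x : nat -> X) (l : X) : Prop :=
  forall e, 0 < e -> exists N, forall n, (N <= n)%N -> d (x n) l < e.

Definition polish (S : X -> Prop) : Prop :=
  (exists d : X -> X -> R,
     metric_on S d /\
     (forall U, lopen S U <-> metric_open S d U) /\
     (forall x : nat -> X, (forall n, S (x n)) -> cauchy d x ->
        exists l, S l /\ converges_to d x l)) /\
  (exists s : nat -> X, (forall n, S (s n)) /\
     forall U, lopen S U -> (exists p, U p) -> exists n, U (s n)).

(** * (Open topological) groupoids, arrows-only presentation:
    G the set of arrows, B ⊆ G the base (units), mul the partial
    composition (meaningful on composable pairs), inv the inverse;
    s_g = g^{-1} g and t_g = g g^{-1}. *)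
Variables (G B : X -> Prop) (mul : X -> X -> X) (inv : X -> X).

Definition src (g : X) : X := mul (inv g) g.
Definition tgt (g : X) : X := mul g (inv g).
Definition composable (g h : X) : Prop := G g /\ G h /\ src g = tgt h.

Definition is_groupoid : Prop :=
  (forall u, B u -> G u) /\
  (forall g, G g -> G (inv g)) /\
  (forall g h, composable g h -> G (mul g h)) /\
  (forall g, G g -> B (src g) /\ B (tgt g)) /\
  (forall u, B u -> src u = u /\ tgt u = u) /\
  (forall g, G g -> inv (inv g) = g) /\
  (forall g, G g -> mul (tgt g) g = g /\ mul g (src g) = g) /\
  (forall g h, composable g h -> src (mul g h) = src h /\ tgt (mul g h) = tgt g) /\
  (forall g h k, composable g h -> composable h k ->
     mul (mul g h) k = mul g (mul h k)).

Definition is_topological_groupoid : Prop :=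
  is_groupoid /\
  continuous_on G G inv /\
  continuous_on G B src /\
  continuous_on G B tgt /\
  (forall U, lopen G U ->
     lopen2 composable (fun g h => composable g h /\ U (mul g h))).

Definition is_open_topological_groupoid : Prop :=
  is_topological_groupoid /\
  (forall U, lopen G U -> lopen B (fun u => exists g, U g /\ src g = u)).

End Topology.

(* Main.v *)
From Stdlib Require Import Reals Lra Classical ClassicalEpsilon FunctionalExtensionality PropExtensionality ProofIrrelevance Cantor.
From mathcomp Require Import ssreflect ssrfun ssrbool eqtype ssrnat seq choice fintype bigop.
From mathcomp Require Import zify.
Require Import Defs.


Section Syn.
Variable L : language.

Lemma teval_coinc (M : structure L) (v v' : nat -> M) (t : term L) :
  (forall k, tfree k t -> v k = v' k) -> teval M v t = teval M v' t.
Proof.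
elim: t => [n|f args IH] /= H; first by apply: H.
congr (fint M f); apply: functional_extensionality => i.
apply: IH => k Hk; apply: H; by exists i.
Qed.

Lemma sat_coinc (M : structure L) (phi : formula L) : forall (v v' : nat -> M),
  (forall k, ffree k phi -> v k = v' k) -> (sat M v phi <-> sat M v' phi).
Proof.
elim: phi => [t1 t2|r args|psi IH|psi1 IH1 psi2 IH2|n psi IH] v v' H /=.
- rewrite (teval_coinc M v v' t1) ?(teval_coinc M v v' t2) //;
   move=> k Hk; apply: H; by [right|left].
- have -> : (fun i => teval M v (args i)) = (fun i => teval M v' (args i)) => //.
  apply: functional_extensionality => i; apply: teval_coinc => k Hk; apply: H; by exists i.
- by rewrite (IH v v').
- by rewrite (IH1 v v') ?(IH2 v v') // => k Hk; apply: H; [right|left].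
- have Hag : forall m, (sat M (upd v n m) psi <-> sat M (upd v' n m) psi).
    move=> m; apply: IH => k Hk; rewrite /upd.
    case: eqP => // /eqP Hkn; apply: H; split=> //; by move=> E; rewrite E eqxx in Hkn.
  by split=> -[m Hm]; exists m; apply/Hag.
Qed.

Lemma sat_ext (M : structure L) (phi : formula L) (v v' : nat -> M) :
  (forall k, v k = v' k) -> (sat M v phi <-> sat M v' phi).
Proof. by move=> H; apply: sat_coinc => k _. Qed.

Lemma fin_bound (n : nat) (P : 'I_n -> nat -> Prop) :
  (forall i B B', B <= B' -> P i B -> P i B') -> (forall i, exists B, P i B) ->
  exists B, forall i, P i B.
Proof.
move=> Hm H.
pose F := fun i => proj1_sig (constructive_indefinite_description _ (H i)).
exists (\max_(i < n) F i) => i.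
apply: (Hm i (F i)); first by apply: (leq_bigmax i).
rewrite /F; by case: (constructive_indefinite_description _ _).
Qed.

Lemma tbound (t : term L) : exists B, forall k, tfree k t -> k < B.
Proof.
elim: t => [n|f args IH] /=.
- exists n.+1 => k ->; done.
- have [B HB] := fin_bound (far f) (fun i B => forall k, tfree k (args i) -> k < B)
     ltac:(move=> i B B' le HB k Hk; exact: leq_trans (HB k Hk) le) IH.
  exists B => k [i Hi]; exact: HB i k Hi.
Qed.

Lemma fbound (phi : formula L) : exists B, forall k, ffree k phi -> k < B.
Proof.
elim: phi => [t1 t2|r args|psi IH|psi1 IH1 psi2 IH2|n psi IH] /=.
- have [B1 H1] := tbound t1; have [B2 H2] := tbound t2.
  exists (B1 + B2) => k [Hk|Hk]; [have := H1 _ Hk|have := H2 _ Hk]; lia.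
- have [B HB] := fin_bound (rar r) (fun i B => forall k, tfree k (args i) -> k < B)
     ltac:(move=> i B B' le HB k Hk; exact: leq_trans (HB k Hk) le) (fun i => tbound (args i)).
  exists B => k [i Hi]; exact: HB i k Hi.
- exact: IH.
- have [B1 H1] := IH1; have [B2 H2] := IH2.
  exists (B1 + B2) => k [Hk|Hk]; [have := H1 _ Hk|have := H2 _ Hk]; lia.
- have [B HB] := IH; exists B => k [_ Hk]; exact: HB.
Qed.

Fixpoint rent (rho : nat -> nat) (t : term L) : term L :=
  match t with
  | tvar n => tvar (rho n)
  | tapp f args => tapp f (fun i => rent rho (args i))
  end.

Lemma teval_rent (M : structure L) (v : nat -> M) rho t :
  teval M v (rent rho t) = teval M (fun k => v (rho k)) t.
Proof.
elim: t => [n|f args IH] //=; congr (fint M f); apply: functional_extensionality => i; exact: IH.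
Qed.

Fixpoint mx (rho : nat -> nat) (B : nat) : nat :=
  match B with 0 => 0 | S B' => maxn (mx rho B') (rho B') end.

Lemma mx_ge rho B j : j < B -> rho j <= mx rho B.
Proof.
elim: B => [|B IH] //= H.
rewrite ltnS leq_eqVlt in H; case/orP: H => [/eqP ->|H]; first by apply: leq_maxr.
exact: leq_trans (IH H) (leq_maxl _ _).
Qed.

Lemma ren_ex (phi : formula L) : forall rho : nat -> nat, exists phi' : formula L,
  forall (M : structure L) (v : nat -> M), sat M v phi' <-> sat M (fun k => v (rho k)) phi.
Proof.
elim: phi => [t1 t2|r args|psi IH|psi1 IH1 psi2 IH2|n psi IH] rho.
- exists (fequ (rent rho t1) (rent rho t2)) => M v /=; by rewrite !teval_rent.
- exists (frel r (fun i => rent rho (args i))) => M v /=.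
  have -> // : (fun i => teval M v (rent rho (args i))) = (fun i => teval M (fun k => v (rho k)) (args i)).
  apply: functional_extensionality => i; exact: teval_rent.
- have [p Hp] := IH rho; exists (fneg p) => M v /=; by rewrite Hp.
- have [p1 H1] := IH1 rho; have [p2 H2] := IH2 rho; exists (fand p1 p2) => M v /=; by rewrite H1 H2.
- have [B HB] := fbound psi.
  set N := (mx rho B).+1.
  have [p Hp] := IH (upd rho n N).
  exists (fex N p) => M v /=.
  have Hag : forall m, sat M (fun k => upd v N m (upd rho n N k)) psi <->
                       sat M (upd (fun k => v (rho k)) n m) psi.
    move=> m; apply: sat_coinc => k Hk; rewrite /upd /=.
    case: (k =P n) => [Ekn|Hkn]; first by rewrite eqxx.
    have Hne : rho k != N.
      by apply/eqP => E; have := mx_ge rho B k (HB k Hk); rewrite E /N ltnn.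
    by rewrite (negbTE Hne).
  by split=> -[m Hm]; exists m; [rewrite -Hag -Hp | rewrite Hp Hag].
Qed.

Definition ren (rho : nat -> nat) (phi : formula L) : formula L :=
  proj1_sig (constructive_indefinite_description _ (ren_ex phi rho)).

Lemma ren_spec rho phi (M : structure L) (v : nat -> M) :
  sat M v (ren rho phi) <-> sat M (fun k => v (rho k)) phi.
Proof. rewrite /ren; case: (constructive_indefinite_description _ _) => p Hp /=; exact: Hp. Qed.

End Syn.


Lemma half_dbl n : (n.*2)./2 = n.
Proof. by elim: n => // n IH; rewrite doubleS /= IH. Qed.
Lemma half_dbl1 n : (n.*2.+1)./2 = n.
Proof. by rewrite /= uphalf_double. Qed.

Lemma pairseq_even {A} (a b : nat -> A) i : pairseq a b (i.*2) = a i.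
Proof. by rewrite /pairseq odd_double half_dbl. Qed.
Lemma pairseq_odd {A} (a b : nat -> A) i : pairseq a b (i.*2.+1) = b i.
Proof. by rewrite /pairseq /= odd_double /= uphalf_double. Qed.

Lemma pairseq_surj {A} (a b : nat -> A) : enumeration a -> forall m, exists k, pairseq a b k = m.
Proof. move=> Ha m; have [i Hi] := Ha m; exists i.*2; by rewrite pairseq_even. Qed.

Lemma pairseq_map {A B} (h : A -> B) (a b : nat -> A) k :
  pairseq (fun i => h (a i)) (fun i => h (b i)) k = h (pairseq a b k).
Proof. rewrite /pairseq; by case: odd. Qed.

Lemma pairseq_ext {A} (a b a' b' : nat -> A) :
  (forall i, a i = a' i) -> (forall i, b i = b' i) -> pairseq a b = pairseq a' b'.
Proof. move=> Ha Hb; apply: functional_extensionality => k; rewrite /pairseq; by case: odd. Qed.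

Lemma eqP_iff {P Q : Prop} : P = Q -> (P <-> Q). Proof. by move->. Qed.

Section Iso.
Variable L : language.

Lemma sat_ext' (M : structure L) (phi : formula L) (v v' : nat -> M) :
  (forall k, v k = v' k) -> sat M v phi -> sat M v' phi.
Proof. move=> H; exact: (proj1 (sat_ext L M phi v v' H)). Qed.

Definition isom (M M' : structure L) (h : M -> M') : Prop :=
  (forall x y, h x = h y -> x = y) /\ (forall m', exists m, h m = m') /\
  (forall f ds, h (fint M f ds) = fint M' f (fun i => h (ds i))) /\
  (forall r ds, rint M r ds <-> rint M' r (fun i => h (ds i))).

Lemma teval_iso (M M' : structure L) (h : M -> M') (u : nat -> M) t : isom M M' h ->
  teval M' (fun k => h (u k)) t = h (teval M u t).
Proof.
move=> [_ [_ [Hf _]]]; elim: t => [n|f args IH] //=.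
rewrite Hf; congr (fint M' f); apply: functional_extensionality => i; exact: IH.
Qed.

Lemma sat_iso (M M' : structure L) (h : M -> M') phi : isom M M' h -> forall (u : nat -> M),
  sat M u phi <-> sat M' (fun k => h (u k)) phi.
Proof.
move=> Hh; have [Hinj [Hsurj [Hf Hr]]] := Hh.
elim: phi => [t1 t2|r args|psi IH|psi1 IH1 psi2 IH2|n psi IH] u /=.
- rewrite !teval_iso //; split=> [->//|]; exact: Hinj.
- rewrite Hr.
  have -> // : (fun i => h (teval M u (args i))) = (fun i => teval M' (fun k => h (u k)) (args i)).
  apply: functional_extensionality => i; by rewrite teval_iso.
- by rewrite IH.
- by rewrite IH1 IH2.
- split=> -[m Hm].
  + exists (h m); move: Hm; rewrite IH; apply: sat_ext' => k; rewrite /upd; by case: eqP.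
  + have [m0 Hm0] := Hsurj m; exists m0; rewrite IH; move: Hm; apply: sat_ext' => k;
    rewrite /upd; case: eqP => //.
Qed.

Lemma mk_iso (M M' : structure L) (v : nat -> M) (v' : nat -> M') :
  (forall m, exists k, v k = m) -> (forall m, exists k, v' k = m) ->
  (forall phi, sat M v phi <-> sat M' v' phi) ->
  exists h : M -> M', isom M M' h /\ forall k, h (v k) = v' k.
Proof.
move=> Sv Sv' Hphi.
pose idx := fun m => proj1_sig (constructive_indefinite_description _ (Sv m)).
have Hidx : forall m, v (idx m) = m.
  by move=> m; rewrite /idx; case: (constructive_indefinite_description _ _).
have Heq : forall i j, v i = v j <-> v' i = v' j.
  by move=> i j; exact: (Hphi (fequ (tvar i) (tvar j))).
pose h := fun m => v' (idx m).
have Hhv : forall k, h (v k) = v' k by move=> k; rewrite /h; apply/Heq; rewrite Hidx.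
exists h; split=> //; split; [|split; [|split]].
- move=> x y; rewrite /h => /Heq; by rewrite !Hidx.
- move=> m'; have [k <-] := Sv' m'; by exists (v k).
- move=> f ds; set k0 := idx (fint M f ds).
  have := Hphi (fequ (tvar k0) (tapp f (fun i => tvar (idx (ds i))))).
  rewrite /= Hidx.
  have -> : (fun i => v (idx (ds i))) = ds by apply: functional_extensionality => i; rewrite Hidx.
  case=> H _; exact: (H erefl).
- move=> r ds.
  have := Hphi (frel r (fun i => tvar (idx (ds i)))); rewrite /=.
  have -> // : (fun i => v (idx (ds i))) = ds by apply: functional_extensionality => i; rewrite Hidx.
Qed.

Lemma tp2_iso (M M' : structure L) (h : M -> M') (x y : nat -> M) : isom M M' h ->
  tp2 M x y = tp2 M' (fun i => h (x i)) (fun i => h (y i)).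
Proof.
move=> Hh; apply: functional_extensionality => phi; apply: propositional_extensionality.
rewrite /tp2 (sat_iso M M' h phi Hh); apply: sat_ext => k; by rewrite pairseq_map.
Qed.

Lemma enum_iso (M M' : structure L) (h : M -> M') (x : nat -> M) : isom M M' h -> enumeration x -> enumeration (fun i => h (x i)).
Proof.
move=> [_ [Hs _]] Hx m'; have [m <-] := Hs m'; have [i <-] := Hx m; by exists i.
Qed.

Lemma transport (M1 M2 : structure L) (a1 b1 : nat -> M1) (a2 b2 : nat -> M2) :
  enumeration a1 -> enumeration a2 -> tp2 M1 a1 b1 = tp2 M2 a2 b2 ->
  exists h : M2 -> M1, isom M2 M1 h /\ (fun i => h (a2 i)) = a1 /\ (fun i => h (b2 i)) = b1.
Proof.
move=> E1 E2 Htp.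
have [h [Hh Hv]] := mk_iso M2 M1 (pairseq a2 b2) (pairseq a1 b1) (pairseq_surj _ _ E2)
   (pairseq_surj _ _ E1) (fun phi => iff_sym (eqP_iff (equal_f Htp phi))).
exists h; split=> //; split; apply: functional_extensionality => i.
- by have := Hv i.*2; rewrite !pairseq_even.
- by have := Hv i.*2.+1; rewrite !pairseq_odd.
Qed.

Lemma same_second (M : structure L) (b c c' : nat -> M) :
  enumeration b -> tp2 M b c = tp2 M b c' -> c = c'.
Proof.
move=> Eb Htp; apply: functional_extensionality => j.
have [k Hk] := Eb (c j).
have := equal_f Htp (fequ (tvar k.*2) (tvar j.*2.+1)); rewrite /tp2 /= !pairseq_even !pairseq_odd Hk.
move=> E; have : c j = c' j <-> c j = c j by rewrite E.
by move=> [_ ->].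
Qed.

Lemma same_first (M : structure L) (a a' b : nat -> M) :
  enumeration b -> tp2 M a b = tp2 M a' b -> a = a'.
Proof.
move=> Eb Htp; apply: functional_extensionality => j.
have [k Hk] := Eb (a j).
have := equal_f Htp (fequ (tvar j.*2) (tvar k.*2.+1)); rewrite /tp2 /= !pairseq_even !pairseq_odd Hk.
move=> E; have : a' j = a j by rewrite -E.
by move=> ->.
Qed.

End Iso.


Section Grpd.
Variable L : language.
Variable T : theory L.

Definition gmul (p q : ftype L) : ftype L := fun phi =>
  exists (M : structure L) (a b c : nat -> M), is_model M T /\ enumeration a /\
    enumeration b /\ enumeration c /\ p = tp2 M a b /\ q = tp2 M b c /\ tp2 M a c phi.

Definition ginv (p : ftype L) : ftype L := fun phi =>
  exists (M : structure L) (a b : nat -> M), is_model M T /\ enumeration a /\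
    enumeration b /\ p = tp2 M a b /\ tp2 M b a phi.

Lemma gmul_eq (M : structure L) (a b c : nat -> M) : is_model M T ->
  enumeration a -> enumeration b -> enumeration c ->
  gmul (tp2 M a b) (tp2 M b c) = tp2 M a c.
Proof.
move=> HM Ea Eb Ec; apply: functional_extensionality => phi; apply: propositional_extensionality.
split.
- case=> M' [a' [b' [c' [HM' [Ea' [Eb' [Ec' [E1 [E2 H]]]]]]]]].
  have [h [Hh [Ha Hb]]] := transport L M M' a b a' b' Ea Ea' E1.
  rewrite (tp2_iso L M' M h a' c' Hh) Ha in H.
  rewrite (tp2_iso L M' M h b' c' Hh) Hb in E2.
  by rewrite (same_second L M b c _ Eb E2).
- move=> H; by exists M, a, b, c.
Qed.

Lemma ginv_eq (M : structure L) (a b : nat -> M) : is_model M T ->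
  enumeration a -> enumeration b -> ginv (tp2 M a b) = tp2 M b a.
Proof.
move=> HM Ea Eb; apply: functional_extensionality => phi; apply: propositional_extensionality.
split.
- case=> M' [a' [b' [HM' [Ea' [Eb' [E1 H]]]]]].
  have [h [Hh [Ha Hb]]] := transport L M M' a b a' b' Ea Ea' E1.
  by rewrite (tp2_iso L M' M h b' a' Hh) Ha Hb in H.
- move=> H; by exists M, a, b.
Qed.

Lemma src_tp2 (M : structure L) (a b : nat -> M) : is_model M T ->
  enumeration a -> enumeration b -> src gmul ginv (tp2 M a b) = tp2 M b b.
Proof. by move=> HM Ea Eb; rewrite /src ginv_eq // gmul_eq. Qed.

Lemma tgt_tp2 (M : structure L) (a b : nat -> M) : is_model M T ->
  enumeration a -> enumeration b -> tgt gmul ginv (tp2 M a b) = tp2 M a a.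
Proof. by move=> HM Ea Eb; rewrite /tgt ginv_eq // gmul_eq. Qed.

Lemma comp_rep g h : composable (G0 T) gmul ginv g h ->
  exists (M : structure L) (a b c : nat -> M), is_model M T /\
    enumeration a /\ enumeration b /\ enumeration c /\ g = tp2 M a b /\ h = tp2 M b c.
Proof.
case=> [[M [a [b [HM [Ea [Eb ->]]]]]] [[M' [b' [c' [HM' [Eb' [Ec' ->]]]]]] E]].
rewrite src_tp2 // tgt_tp2 // in E.
have [hh [Hh [Hb _]]] := transport L M M' b b b' b' Eb Eb' E.
exists M, a, b, (fun i => hh (c' i)).
split; first done. split; first done. split; first done.
split; first exact: (enum_iso L M' M hh c' Hh Ec').
split; first done.
by rewrite (tp2_iso L M' M hh b' c' Hh) Hb.
Qed.

Lemma B0_tp2 (M : structure L) (b : nat -> M) : is_model M T -> enumeration b ->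
  B0 T (tp2 M b b).
Proof.
move=> HM Eb; split; first by exists M, b, b.
by move=> i; rewrite /tp2 /= pairseq_even pairseq_odd.
Qed.

Lemma groupoid_ok : is_groupoid (G0 T) (B0 T) gmul ginv.
Proof.
rewrite /is_groupoid; split; [by move=> u []|split; [|split; [|split; [|split; [|split; [|split; [|split]]]]]]].
- move=> g [M [a [b [HM [Ea [Eb ->]]]]]]; rewrite ginv_eq //; by exists M, b, a.
- move=> g h /comp_rep [M [a [b [c [HM [Ea [Eb [Ec [-> ->]]]]]]]]].
  rewrite gmul_eq //; by exists M, a, c.
- move=> g [M [a [b [HM [Ea [Eb ->]]]]]]; rewrite src_tp2 // tgt_tp2 //.
  split; exact: B0_tp2.
- move=> u [[M [a [b [HM [Ea [Eb ->]]]]]] Hu].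
  have Eab : a = b.
    apply: functional_extensionality => i; have := Hu i.
    by rewrite /tp2 /= pairseq_even pairseq_odd.
  subst b; by rewrite src_tp2 // tgt_tp2.
- move=> g [M [a [b [HM [Ea [Eb ->]]]]]]; by rewrite !ginv_eq.
- move=> g [M [a [b [HM [Ea [Eb ->]]]]]]; by rewrite src_tp2 // tgt_tp2 // !gmul_eq.
- move=> g h /comp_rep [M [a [b [c [HM [Ea [Eb [Ec [-> ->]]]]]]]]].
  by rewrite gmul_eq // !src_tp2 // !tgt_tp2.
- move=> g h k /comp_rep [M [a [b [c [HM [Ea [Eb [Ec [-> ->]]]]]]]]].
  move=> /comp_rep [M' [b' [c' [d' [HM' [Eb' [Ec' [Ed' [E ->]]]]]]]]].
  have [hh [Hh [Hb Hc]]] := transport L M M' b c b' c' Eb Eb' E.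
  rewrite (tp2_iso L M' M hh c' d' Hh) Hc.
  have Ed := enum_iso L M' M hh d' Hh Ed'.
  by rewrite !gmul_eq.
Qed.

End Grpd.


Lemma nat_cases (P : nat -> Prop) : (forall i, P i.*2) -> (forall i, P i.*2.+1) -> forall k, P k.
Proof.
move=> H0 H1 k; rewrite -(odd_double_half k); case: (odd k) => /=; [exact: H1|exact: H0].
Qed.

Lemma odd_dbl1 i : odd i.*2.+1 = true.
Proof. by rewrite /= odd_double. Qed.

Section Topo.
Variable L : language.
Variable T : theory L.

Definition TT : formula L := fequ (tvar 0) (tvar 0).

Fixpoint bigconj (F : nat -> formula L) (n : nat) : formula L :=
  match n with 0 => TT | S n => fand (bigconj F n) (F n) end.

Lemma sat_bigconj (M : structure L) v F n :
  sat M v (bigconj F n) <-> forall i, i < n -> sat M v (F i).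
Proof.
elim: n => [|n IH] /=; first by split=> // _ i.
rewrite IH; split=> [[H1 H2] i|H]; first by rewrite ltnS leq_eqVlt => /orP [/eqP ->|/H1].
split; [move=> i Hi; apply: H; exact: ltnW | exact: H].
Qed.

Lemma cont_ren (S S' : ftype L -> Prop) (F : ftype L -> ftype L) (rho : nat -> nat) :
  (forall p, S p -> S' (F p)) -> (forall p, S p -> forall phi, F p phi <-> p (ren L rho phi)) ->
  continuous_on S S' F.
Proof.
move=> HS HF; split=> // U [HU1 HU2]; split; first by move=> p [].
move=> p [Sp Up]; have [phi [Hphi Hq]] := HU2 _ Up.
exists (ren L rho phi); split; first by rewrite -HF.
move=> q Sq Hq'; split=> //; apply: Hq; [exact: HS | by rewrite HF].
Qed.

Definition swp (k : nat) : nat := if odd k then k.-1 else k.+1.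

Lemma cont_inv : continuous_on (G0 T) (G0 T) (ginv L T).
Proof.
apply: (cont_ren _ _ _ swp).
- move=> g [M [a [b [HM [Ea [Eb ->]]]]]]; rewrite ginv_eq //; by exists M, b, a.
- move=> g [M [a [b [HM [Ea [Eb ->]]]]]] phi; rewrite ginv_eq // /tp2 ren_spec.
  apply: sat_ext; apply: nat_cases => i; rewrite /swp ?odd_dbl1 ?odd_double /=.
  + by rewrite pairseq_even -[i.*2.+1]/(i.*2.+1) pairseq_odd.
  + by rewrite pairseq_odd pairseq_even.
Qed.

Lemma cont_src : continuous_on (G0 T) (B0 T) (src (gmul L T) (ginv L T)).
Proof.
apply: (cont_ren _ _ _ (fun k => (k./2).*2.+1)).
- move=> g Gg; have := groupoid_ok L T; rewrite /is_groupoid => -[_ [_ [_ [H _]]]]; exact: (H g Gg).1.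
- move=> g [M [a [b [HM [Ea [Eb ->]]]]]] phi; rewrite src_tp2 // /tp2 ren_spec.
  apply: sat_ext; apply: nat_cases => i; by rewrite ?half_dbl ?half_dbl1 ?pairseq_even ?pairseq_odd.
Qed.

Lemma cont_tgt : continuous_on (G0 T) (B0 T) (tgt (gmul L T) (ginv L T)).
Proof.
apply: (cont_ren _ _ _ (fun k => (k./2).*2)).
- move=> g Gg; have := groupoid_ok L T; rewrite /is_groupoid => -[_ [_ [_ [H _]]]]; exact: (H g Gg).2.
- move=> g [M [a [b [HM [Ea [Eb ->]]]]]] phi; rewrite tgt_tp2 // /tp2 ren_spec.
  apply: sat_ext; apply: nat_cases => i; by rewrite ?half_dbl ?half_dbl1 ?pairseq_even ?pairseq_odd.
Qed.

Lemma choose_idx {A} (a b : nat -> A) : enumeration b ->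
  exists sigma : nat -> nat, forall i, b (sigma i) = a i.
Proof.
move=> Eb.
exists (fun i => proj1_sig (constructive_indefinite_description _ (Eb (a i)))) => i.
by case: (constructive_indefinite_description _ _).
Qed.

Lemma cont_mul : forall U, lopen (G0 T) U ->
  lopen2 (composable (G0 T) (gmul L T) (ginv L T))
    (fun g h => composable (G0 T) (gmul L T) (ginv L T) g h /\ U (gmul L T g h)).
Proof.
move=> U [HU1 HU2]; split; first by move=> ? ? [].
move=> g h [Hc Ugh].
have [M [a [b [c [HM [Ea [Eb [Ec [Eg Eh]]]]]]]]] := comp_rep L T g h Hc.
subst g h; rewrite gmul_eq // in Ugh.
have [phi [Hphi HU]] := HU2 _ Ugh.
have [B HB] := fbound L phi.
have [sigma Hs] := choose_idx a b Eb.
pose rho := fun k => if odd k then k else (sigma (k./2)).*2.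
exists (bigconj (fun i => fequ (tvar i.*2) (tvar (sigma i).*2.+1)) B), (ren L rho phi).
split; [|split].
- rewrite /tp2 sat_bigconj => i _ /=; by rewrite pairseq_even pairseq_odd.
- rewrite /tp2 ren_spec; move: Hphi; rewrite /tp2; apply: sat_ext' => k; move: k.
  apply: nat_cases => i; rewrite /rho ?odd_dbl1 ?odd_double /= ?half_dbl.
  + by rewrite !pairseq_even.
  + by rewrite !pairseq_odd.
- move=> g' h' Hc' Hg' Hh'; split=> //.
  have [M' [a' [b' [c' [HM' [Ea' [Eb' [Ec' [Eg Eh]]]]]]]]] := comp_rep L T g' h' Hc'.
  subst g' h'; rewrite gmul_eq //; apply: HU; first by exists M', a', c'.
  move: Hg'; rewrite /tp2 sat_bigconj /= => Hg'.
  move: Hh'; rewrite /tp2 ren_spec; apply: (proj1 (sat_coinc L _ _ _ _ _)) => k Hk.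
  have := HB k Hk; move: k Hk; apply: nat_cases => i _ Hi; rewrite /rho ?odd_dbl1 ?odd_double /= ?half_dbl.
  + have Hi' : i < B by move: Hi; rewrite -addnn; lia.
    have := Hg' i Hi'; rewrite !pairseq_even pairseq_odd; by move->.
  + by rewrite !pairseq_odd.
Qed.

Lemma open_src : forall U, lopen (G0 T) U ->
  lopen (B0 T) (fun u => exists g, U g /\ src (gmul L T) (ginv L T) g = u).
Proof.
move=> U [HU1 HU2]; split.
- move=> u [g [Ug <-]]; have := groupoid_ok L T; rewrite /is_groupoid => -[_ [_ [_ [H _]]]].
  exact: (H g (HU1 g Ug)).1.
- move=> u [g [Ug <-]].
  have [M [a [b [HM [Ea [Eb Eg]]]]]] := HU1 g Ug; subst g.
  have [phi [Hphi HU]] := HU2 _ Ug.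
  have [B HB] := fbound L phi.
  have [sigma Hs] := choose_idx a b Eb.
  pose rho := fun k => if odd k then k else (sigma (k./2)).*2.
  exists (ren L rho phi); split.
  + rewrite src_tp2 // /tp2 ren_spec; move: Hphi; rewrite /tp2; apply: sat_ext' => k; move: k.
    apply: nat_cases => i; rewrite /rho ?odd_dbl1 ?odd_double /= ?half_dbl.
    * by rewrite !pairseq_even.
    * by rewrite !pairseq_odd.
  + move=> u' [[M' [a'' [b' [HM' [Ea'' [Eb' Eu]]]]]] Hu'] Hchi.
    have Eab : a'' = b'.
      apply: functional_extensionality => i; have := Hu' i.
      by rewrite Eu /tp2 /= pairseq_even pairseq_odd.
    subst a'' u'.
    pose a' := fun i => if i < B then b' (sigma i) else b' (i - B).
    have Ea' : enumeration a'.
      move=> m; have [j <-] := Eb' m; exists (j + B); rewrite /a'.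
      have -> : (j + B < B) = false by lia.
      by rewrite addnK.
    exists (tp2 M' a' b'); split; last by rewrite src_tp2.
    apply: HU; first by exists M', a', b'.
    move: Hchi; rewrite /tp2 ren_spec; apply: (proj1 (sat_coinc L _ _ _ _ _)) => k Hk.
    have := HB k Hk; move: k Hk; apply: nat_cases => i _ Hi; rewrite /rho ?odd_dbl1 ?odd_double /= ?half_dbl.
    * have Hi' : i < B by move: Hi; rewrite -addnn; lia.
      by rewrite !pairseq_even /a' Hi'.
    * by rewrite !pairseq_odd.
Qed.

Lemma open_grpd : is_open_topological_groupoid (G0 T) (B0 T) (gmul L T) (ginv L T).
Proof.
split; last exact: open_src.
split; first exact: groupoid_ok.
split; first exact: cont_inv.
split; first exact: cont_src.
split; first exact: cont_tgt.
exact: cont_mul.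
Qed.

End Topo.


Section Code.
Variable L : language.
Variable ef : fsym L -> nat.
Variable er : rsym L -> nat.
Hypothesis Hef : injective ef.
Hypothesis Her : injective er.

Fixpoint tcode (t : term L) : GenTree.tree nat :=
  match t with
  | tvar n => GenTree.Node 0 [:: GenTree.Leaf n]
  | tapp f args => GenTree.Node 1 (GenTree.Leaf (ef f) :: [seq tcode (args i) | i <- enum 'I_(far f)])
  end.

Lemma tcode_inj : injective tcode.
Proof.
elim=> [n|f args IH] [n'|f' args'] //=; first by case=> ->.
case=> /Hef Ef; subst f' => /eq_in_map Hm; congr (tapp f); apply: functional_extensionality => i.
apply: IH; apply: Hm; by rewrite mem_enum.
Qed.

Fixpoint fcode (phi : formula L) : GenTree.tree nat :=
  match phi with
  | fequ t1 t2 => GenTree.Node 2 [:: tcode t1; tcode t2]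
  | frel r args => GenTree.Node 3 (GenTree.Leaf (er r) :: [seq tcode (args i) | i <- enum 'I_(rar r)])
  | fneg psi => GenTree.Node 4 [:: fcode psi]
  | fand p q => GenTree.Node 5 [:: fcode p; fcode q]
  | fex n psi => GenTree.Node 6 [:: GenTree.Leaf n; fcode psi]
  end.

Lemma fcode_inj : injective fcode.
Proof.
elim=> [t1 t2|r args|p IH|p IHp q IHq|n p IH] [t1' t2'|r' args'|p'|p' q'|n' p'] //=.
- by case=> /tcode_inj -> /tcode_inj ->.
- case=> /Her Er; subst r' => /eq_in_map Hm; congr (frel r); apply: functional_extensionality => i.
  apply: tcode_inj; apply: Hm; by rewrite mem_enum.
- by case=> /IH ->.
- by case=> /IHp -> /IHq ->.
- by case=> -> /IH ->.
Qed.

Definition code (phi : formula L) : nat := pickle (fcode phi).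

Lemma code_inj : injective code.
Proof. move=> x y /(pcan_inj pickleK); exact: fcode_inj. Qed.

Definition enumf (n : nat) : formula L :=
  epsilon (inhabits (TT L)) (fun phi => code phi = n).

Lemma enumf_code phi : enumf (code phi) = phi.
Proof.
apply: code_inj; rewrite /enumf.
by apply: (epsilon_spec (inhabits (TT L)) (fun psi => code psi = code phi)); exists phi.
Qed.

End Code.

Lemma ex_least (Q : nat -> Prop) n : Q n -> exists c, Q c /\ forall j, j < c -> ~ Q j.
Proof.
have : forall N k, k <= N -> Q k -> exists c, Q c /\ forall j, j < c -> ~ Q j.
  elim=> [|N IH] k Hk HQ.
  - exists k; split; first exact: HQ. move=> j Hj; lia.
  - case: (classic (exists j, j < k /\ Q j)) => [[j [Hj Qj]]|H].
    + apply: (IH j) => //; lia.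
    + exists k; split; first exact: HQ. move=> j Hj Qj; apply: H; by exists j.
move=> H HQ; exact: (H n n (leqnn n) HQ).
Qed.

Definition least (Q : nat -> Prop) : nat :=
  epsilon (inhabits 0) (fun i => Q i /\ forall j, j < i -> ~ Q j).

Lemma least_spec (Q : nat -> Prop) : (exists i, Q i) ->
  Q (least Q) /\ forall j, j < least Q -> ~ Q j.
Proof.
move=> [i Hi]; rewrite /least; apply: (epsilon_spec (inhabits 0) (fun i => Q i /\ forall j, j < i -> ~ Q j)).
exact: ex_least Hi.
Qed.

Lemma least_unique (Q : nat -> Prop) c : Q c -> (forall j, j < c -> ~ Q j) -> least Q = c.
Proof.
move=> Hc Hl; have [H1 H2] := least_spec Q (ex_intro _ c Hc).
case: (ltngtP (least Q) c) => // H.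
- by have := Hl _ H.
- by have := H2 _ H.
Qed.

Lemma least_le (Q : nat -> Prop) n : Q n -> least Q <= n.
Proof.
move=> Hn; have [H1 H2] := least_spec Q (ex_intro _ n Hn).
rewrite leqNgt; apply/negP => H; exact: H2 _ H Hn.
Qed.


Section TermModel.
Variable L : language.
Variable T : theory L.
Variable l : ftype L.
Hypothesis HTs : forall phi, T phi -> sentence phi.
Hypothesis H1 : forall phi, l (fneg phi) <-> ~ l phi.
Hypothesis H2 : forall a b, l (fand a b) <-> l a /\ l b.
Hypothesis H3 : forall phi psi, (forall (M : structure L), is_model M T -> forall v : nat -> M,
   sat M v phi -> sat M v psi) -> l phi -> l psi.
Hypothesis H4 : forall m psi, l (fex m psi) ->
  (exists i, l (ren L (upd (fun k => k) m i.*2) psi)) /\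
  (exists j, l (ren L (upd (fun k => k) m j.*2.+1) psi)).

Definition valid (phi : formula L) := forall (M : structure L), is_model M T -> forall v : nat -> M, sat M v phi.

Lemma lTT : l (TT L).
Proof.
case: (classic (l (TT L))) => // H.
have H' : l (fneg (TT L)) by apply/H1.
apply: (H3 (fneg (TT L)) (TT L)); last exact: H'. by move=> M _ v _ /=.
Qed.

Lemma lvalid phi : valid phi -> l phi.
Proof. move=> Hv; apply: H3 _ _ _ lTT => M HM v _; exact: Hv. Qed.

Lemma lequiv phi psi : (forall (M : structure L), is_model M T -> forall v : nat -> M,
   sat M v phi <-> sat M v psi) -> (l phi <-> l psi).
Proof. move=> H; split; apply: H3 => M HM v; by rewrite H. Qed.

Lemma limp2 a b c : (forall (M : structure L), is_model M T -> forall v : nat -> M,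
   sat M v a -> sat M v b -> sat M v c) -> l a -> l b -> l c.
Proof.
move=> H la lb; apply: (H3 (fand a b) c); [move=> M HM v [Ha Hb]; exact: H | exact: (proj2 (H2 a b) (conj la lb))].
Qed.

Lemma limp3 a b c d : (forall (M : structure L), is_model M T -> forall v : nat -> M,
   sat M v a -> sat M v b -> sat M v c -> sat M v d) -> l a -> l b -> l c -> l d.
Proof.
move=> H la lb lc; apply: (limp2 (fand a b) c); [move=> M HM v [Ha Hb]; exact: H | exact: (proj2 (H2 a b) (conj la lb)) | exact: lc].
Qed.

Definition E i j := l (fequ (tvar i) (tvar j)).

Lemma E_refl i : E i i.
Proof. by apply: lvalid. Qed.
Lemma E_sym i j : E i j -> E j i.
Proof. apply: H3 => M _ v /=; done. Qed.
Lemma E_trans i j k : E i j -> E j k -> E i k.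
Proof. apply: limp2 => M _ v /= -> ->; done. Qed.

Definition cls k : nat -> Prop := fun j => E j k.

Lemma cls_eq i j : cls i = cls j <-> E i j.
Proof.
split=> [H|H].
- have := equal_f H i; rewrite /cls => <-; exact: E_refl.
- apply: functional_extensionality => x; apply: propositional_extensionality; rewrite /cls.
  split=> Hx; [exact: E_trans Hx H | exact: E_trans Hx (E_sym _ _ H)].
Qed.

Definition D : Type := {X : nat -> Prop | exists k, X = cls k}.
Definition cl (k : nat) : D := exist _ (cls k) (ex_intro _ k erefl).

Lemma exist_eq (X Y : nat -> Prop) (p : exists k, X = cls k) (q : exists k, Y = cls k) :
  X = Y -> exist (fun X => exists k, X = cls k) X p = exist _ Y q.
Proof. move=> E0; subst Y; f_equal; apply: proof_irrelevance. Qed.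

Lemma cl_eq i j : cl i = cl j <-> E i j.
Proof.
rewrite -cls_eq; split=> [H|H]; first by have := f_equal (@proj1_sig _ _) H.
exact: exist_eq.
Qed.

Definition rep (d : D) : nat := proj1_sig (constructive_indefinite_description _ (proj2_sig d)).

Lemma cl_rep d : cl (rep d) = d.
Proof.
rewrite /rep; case: (constructive_indefinite_description _ _) => k Hk /=.
case: d Hk => X p /= Hk; exact: exist_eq.
Qed.

Lemma tw (t : term L) : (exists i, l (fequ (tvar i.*2) t)) /\ (exists j, l (fequ (tvar j.*2.+1) t)).
Proof.
have [B HB] := tbound L t.
have Hv : l (fex B (fequ (tvar B) t)).
  apply: lvalid => M _ v /=; exists (teval M v t); rewrite /upd eqxx.
  apply: teval_coinc => k Hk; rewrite /upd; case: eqP => // E0; have := HB k Hk; lia.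
have Hsem : forall k, l (ren L (upd (fun k => k) B k) (fequ (tvar B) t)) -> l (fequ (tvar k) t).
  move=> k; apply: H3 => M _ v; rewrite ren_spec /= /upd eqxx => ->.
  apply: teval_coinc => k' Hk'; case: eqP => // E0; have := HB k' Hk'; lia.
have [[i Hi] [j Hj]] := H4 _ _ Hv.
split; [exists i | exists j]; exact: Hsem.
Qed.

Definition fint0 (f : fsym L) (ds : 'I_(far f) -> D) : D :=
  cl (epsilon (inhabits 0) (fun k => l (fequ (tvar k) (tapp f (fun i => tvar (rep (ds i))))))).

Lemma fint0_spec f ds : exists w, fint0 f ds = cl w /\
  l (fequ (tvar w) (tapp f (fun i => tvar (rep (ds i))))).
Proof.
eexists; split; first reflexivity.
apply: (epsilon_spec (inhabits 0) (fun k => l (fequ (tvar k) (tapp f (fun i => tvar (rep (ds i))))))).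
have [[i Hi] _] := tw (tapp f (fun i => tvar (rep (ds i)))); by exists i.*2.
Qed.

Definition TM : structure L :=
  {| dom := D; dom_inh := cl 0; fint := fint0;
     rint := fun r ds => l (frel r (fun i => tvar (rep (ds i)))) |}.

Definition conjI n (F : 'I_n -> formula L) : formula L :=
  foldr (fun i acc => fand (F i) acc) (TT L) (enum 'I_n).

Lemma sat_conjI (M : structure L) v n (F : 'I_n -> formula L) :
  sat M v (conjI n F) <-> forall i, sat M v (F i).
Proof.
rewrite /conjI.
have : forall s : seq 'I_n, sat M v (foldr (fun i acc => fand (F i) acc) (TT L) s) <->
        forall i, i \in s -> sat M v (F i).
  elim=> [|x s IH] /=; first by split=> // _ i.
  rewrite IH; split=> [[Hx Hs] i|H]; first by rewrite in_cons => /orP [/eqP ->|/Hs].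
  split; [apply: H; exact: mem_head | move=> i Hi; apply: H; by rewrite in_cons Hi orbT].
move=> ->; split=> H i; [apply: H; by rewrite mem_enum | move=> _; exact: H].
Qed.

Lemma l_conjI n (F : 'I_n -> formula L) : l (conjI n F) <-> forall i, l (F i).
Proof.
rewrite /conjI.
have : forall s : seq 'I_n, l (foldr (fun i acc => fand (F i) acc) (TT L) s) <->
        forall i, i \in s -> l (F i).
  elim=> [|x s IH] /=.
    split=> [_ i|_]; [by rewrite in_nil | exact: lTT].
  rewrite H2 IH; split=> [[Hx Hs] i|H]; first by rewrite in_cons => /orP [/eqP ->|/Hs].
  split; [apply: H; exact: mem_head | move=> i Hi; apply: H; by rewrite in_cons Hi orbT].
move=> ->; split=> H i; [apply: H; by rewrite mem_enum | move=> _; exact: H].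
Qed.

Lemma TL (t : term L) : forall (sigma : nat -> nat) k,
  teval TM (fun j => cl (sigma j)) t = cl k <-> l (fequ (tvar k) (rent L sigma t)).
Proof.
elim: t => [n|f args IH] sigma k /=.
- rewrite cl_eq; split; exact: E_sym.
- set ds := fun i => teval TM (fun j => cl (sigma j)) (args i).
  have [w [-> Hw]] := fint0_spec f ds.
  set Hyp := conjI _ (fun i => fequ (tvar (rep (ds i))) (rent L sigma (args i))).
  have lH : l Hyp.
    apply/l_conjI => i; apply/IH; rewrite cl_rep //.
  have Hsem : forall (M : structure L) (v : nat -> M), sat M v Hyp ->
     teval M v (tapp f (fun i => tvar (rep (ds i)))) = teval M v (tapp f (fun i => rent L sigma (args i))).
    move=> M v /sat_conjI /= Hi; congr (fint M f); apply: functional_extensionality => i; exact: Hi.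
  rewrite cl_eq; split=> Hk.
  + apply: (limp3 _ _ _ _ _ lH Hw Hk) => M _ v /Hsem /= -> <- ->; done.
  + apply: (limp3 _ _ _ _ _ lH Hw Hk) => M _ v /Hsem /= -> -> ->; done.
Qed.

Lemma TrL (phi : formula L) : forall sigma : nat -> nat,
  sat TM (fun j => cl (sigma j)) phi <-> l (ren L sigma phi).
Proof.
elim: phi => [t1 t2|r args|psi IH|psi1 IH1 psi2 IH2|n psi IH] sigma.
- rewrite (lequiv _ (fequ (rent L sigma t1) (rent L sigma t2))); last first.
    by move=> M _ v; rewrite ren_spec /= !teval_rent.
  rewrite /=.
  set d1 := teval TM _ t1; set d2 := teval TM _ t2.
  have Hk1 : l (fequ (tvar (rep d1)) (rent L sigma t1)) by apply/TL; rewrite cl_rep.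
  have Hk2 : l (fequ (tvar (rep d2)) (rent L sigma t2)) by apply/TL; rewrite cl_rep.
  rewrite -(cl_rep d1) -(cl_rep d2) cl_eq; split=> H.
  + apply: (limp3 _ _ _ _ _ Hk1 Hk2 H) => M _ v /= <- <-; done.
  + apply: (limp3 _ _ _ _ _ Hk1 Hk2 H) => M _ v /= -> -> ->; done.
- rewrite (lequiv _ (frel r (fun i => rent L sigma (args i)))); last first.
    move=> M _ v; rewrite ren_spec /=.
    have -> // : (fun i => teval M v (rent L sigma (args i))) = (fun i => teval M (fun k => v (sigma k)) (args i)).
    apply: functional_extensionality => i; exact: teval_rent.
  rewrite /=.
  set ds := fun i => teval TM (fun j => cl (sigma j)) (args i).
  set Hyp := conjI _ (fun i => fequ (tvar (rep (ds i))) (rent L sigma (args i))).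
  have lH : l Hyp.
    apply/l_conjI => i; apply/TL; rewrite cl_rep //.
  have Hsem : forall (M : structure L) (v : nat -> M), sat M v Hyp ->
     (fun i => teval M v (tvar (rep (ds i)))) = (fun i => teval M v (rent L sigma (args i))).
    move=> M v /sat_conjI /= Hi; apply: functional_extensionality => i; exact: Hi.
  split=> H.
  + apply: (limp2 _ _ _ _ lH H) => M _ v /Hsem /= E0; by rewrite E0.
  + apply: (limp2 _ _ _ _ lH H) => M _ v /Hsem /= E0; by rewrite E0.
- rewrite (lequiv _ (fneg (ren L sigma psi))); last by move=> M _ v; rewrite /= !ren_spec.
  by rewrite H1 /= IH.
- rewrite (lequiv _ (fand (ren L sigma psi1) (ren L sigma psi2))); last by move=> M _ v; rewrite /= !ren_spec.
  by rewrite H2 /= IH1 IH2.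
- rewrite /=.
  have Hstep : (exists d : D, sat TM (upd (fun j => cl (sigma j)) n d) psi) <->
               (exists j, l (ren L (upd sigma n j) psi)).
    split=> -[x Hx].
    + exists (rep x); apply/IH; move: Hx; apply: sat_ext' => k; rewrite /upd.
      by case: eqP => // _; rewrite cl_rep.
    + exists (cl x); move/IH: Hx; apply: sat_ext' => k; rewrite /upd; by case: eqP.
  rewrite Hstep; split=> [[j Hj]|H].
  + move: Hj; apply: H3 => M _ v; rewrite !ren_spec /= => Hs; exists (v j).
    move: Hs; apply: sat_ext' => k; rewrite /upd; by case: eqP.
  + have [B HB] := fbound L psi.
    set N := (mx sigma B).+1.
    have HN : forall k, ffree k psi -> k <> n -> sigma k <> N.
      move=> k Hk Hkn E0; have := mx_ge sigma B k (HB k Hk); rewrite E0 /N; lia.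
    have H' : l (fex N (ren L (upd sigma n N) psi)).
      move: H; apply: H3 => M _ v; rewrite ren_spec /= => -[x Hx]; exists x.
      rewrite ren_spec; move: Hx; apply: (proj1 (sat_coinc L _ _ _ _ _)) => k Hk.
      rewrite /upd; case: (k =P n) => [_|Hkn]; first by rewrite eqxx.
      by case: eqP => // /(HN k Hk Hkn).
    have [[i Hi] _] := H4 _ _ H'.
    exists i.*2; move: Hi; apply: H3 => M _ v; rewrite !ren_spec.
    apply: (proj1 (sat_coinc L _ _ _ _ _)) => k Hk.
    rewrite /upd; case: (k =P n) => [_|Hkn]; first by rewrite eqxx.
    by case: eqP => // /(HN k Hk Hkn).
Qed.

Theorem term_model_G0 : G0 T l.
Proof.
exists TM, (fun i => cl i.*2), (fun j => cl j.*2.+1).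
have Hps : forall k, pairseq (fun i => cl i.*2) (fun j => cl j.*2.+1) k = cl k.
  by apply: nat_cases => i; rewrite ?pairseq_even ?pairseq_odd.
have Hl : forall phi, l phi <-> sat TM (fun k => cl k) phi.
  move=> phi; rewrite (TrL phi (fun k => k)); apply: lequiv => M _ v; by rewrite ren_spec.
split; [|split; [|split]].
- move=> phi Tphi v.
  have : sat TM (fun k => cl k) phi by apply/Hl; apply: lvalid => M HM w; exact: HM.
  apply: (proj1 (sat_coinc L _ _ _ _ _)) => k Hk; by have := HTs phi Tphi k.
- move=> d; have [[i Hi] _] := tw (tvar (rep d)); exists i.
  by rewrite -(cl_rep d); apply/cl_eq.
- move=> d; have [_ [j Hj]] := tw (tvar (rep d)); exists j.
  by rewrite -(cl_rep d); apply/cl_eq.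
- apply: functional_extensionality => phi; apply: propositional_extensionality.
  rewrite Hl /tp2; apply: sat_ext => k; by rewrite Hps.
Qed.

End TermModel.


Section LS.
Variable L : language.
Variable T : theory L.
Variable enumf : nat -> formula L.
Variable code : formula L -> nat.
Hypothesis Hcode : forall phi, enumf (code phi) = phi.
Hypothesis HTs : forall phi, T phi -> sentence phi.
Variable M : structure L.
Hypothesis HM : is_model M T.

Definition m0 : M := dom_inh L M.

Definition Fw (k : nat) (u : nat -> M) : M :=
  match enumf (Cantor.of_nat (k./2)).1 with
  | fex m psi => epsilon (inhabits m0) (fun x => sat M (upd u m x) psi)
  | _ => m0
  end.

Fixpoint pre (k : nat) : seq M :=
  match k with 0 => [::] | S k' => rcons (pre k') (Fw k' (fun j => nth m0 (pre k') j)) end.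

Definition vls (k : nat) : M := nth m0 (pre k.+1) k.

Lemma size_pre k : size (pre k) = k.
Proof. by elim: k => //= k IH; rewrite size_rcons IH. Qed.

Lemma pre_nth k j : j < k -> nth m0 (pre k) j = vls j.
Proof.
elim: k => // k IH Hj; rewrite /= nth_rcons size_pre.
case: (ltngtP j k) => [H|H|H].
- by rewrite IH.
- lia.
- subst j; by rewrite /vls /= nth_rcons size_pre ltnn eqxx.
Qed.

Lemma vls_def k : vls k = Fw k (fun j => nth m0 (pre k) j).
Proof. by rewrite /vls /= nth_rcons size_pre ltnn eqxx. Qed.

Lemma hen_ls m psi B k : (forall j, ffree j (fex m psi) -> j < B) ->
  (Cantor.of_nat (k./2)).1 = code (fex m psi) -> B <= k ->
  sat M vls (fex m psi) -> sat M vls (ren L (upd (fun j => j) m k) psi).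
Proof.
move=> HB Hk HBk Hs.
set u := fun j => nth m0 (pre k) j.
have Hu : forall j, j < B -> u j = vls j by move=> j Hj; rewrite /u pre_nth //; lia.
have Hsu : sat M u (fex m psi).
  move: Hs; apply: (proj1 (sat_coinc L _ _ _ _ _)) => j Hj; rewrite Hu //; exact: HB.
have Hvk : sat M (upd u m (vls k)) psi.
  rewrite vls_def /Fw Hk Hcode.
  exact: (epsilon_spec (inhabits m0) (fun x => sat M (upd u m x) psi) Hsu).
rewrite ren_spec; move: Hvk; apply: (proj1 (sat_coinc L _ _ _ _ _)) => j Hj.
rewrite /upd; case: eqP => // Hjm; apply: Hu; apply: HB; split=> //; by move=> E0; apply: Hjm.
Qed.

Lemma ls_nonempty : exists p, G0 T p.
Proof.
exists (fun phi => sat M vls phi).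
apply: (term_model_G0 L T) => //.
- move=> phi psi H; exact: H M HM vls.
- move=> m psi Hs.
  have [B HB] := fbound L (fex m psi).
  set h := Cantor.to_nat (code (fex m psi), B).
  have HBh : B <= h by have := to_nat_non_decreasing (code (fex m psi)) B; rewrite /h; lia.
  have Hof : Cantor.of_nat h = (code (fex m psi), B) by rewrite /h cancel_of_to.
  split; [exists h | exists h].
  + apply: hen_ls HB _ _ Hs; [by rewrite half_dbl Hof | rewrite -addnn; lia].
  + apply: hen_ls HB _ _ Hs; [by rewrite half_dbl1 Hof | rewrite -addnn; lia].
Qed.

End LS.


Lemma inv_pos n : (0 < / INR n.+1)%R.
Proof. apply: Rinv_0_lt_compat; apply: lt_0_INR; apply/ltP. done. Qed.

Lemma inv_le m n : m <= n -> (/ INR n.+1 <= / INR m.+1)%R.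
Proof.
move=> H; apply: Rinv_le_contravar; first by apply: lt_0_INR; apply/ltP.
apply: le_INR; apply/leP; done.
Qed.

Lemma inv_lt m n : m < n -> (/ INR n.+1 < / INR m.+1)%R.
Proof.
move=> H; apply: Rinv_lt_contravar.
- apply: Rmult_lt_0_compat; apply: lt_0_INR; by apply/ltP.
- apply: lt_INR; apply/ltP; done.
Qed.

Lemma arch e : (0 < e)%R -> exists K, (/ INR K.+1 < e)%R.
Proof.
move=> He; have [N [HN HN0]] := archimed_cor1 e He.
exists N.-1; have -> : N.-1.+1 = N by move/ltP: HN0; lia.
done.
Qed.

Section Metric.
Variable L : language.
Variable T : theory L.
Variable enumf : nat -> formula L.
Variable code : formula L -> nat.
Hypothesis Hcode : forall phi, enumf (code phi) = phi.
Hypothesis HTs : forall phi, T phi -> sentence phi.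

Definition SG := G0 T.
Definition FF : formula L := fneg (TT L).

Definition reqA (n : nat) : formula L :=
  match enumf (n./2) with fex m psi => fex m psi | _ => FF end.
Definition reqW (n i : nat) : formula L :=
  match enumf (n./2) with fex m psi => ren L (upd (fun k => k) m (i.*2 + odd n)) psi | _ => FF end.

Definition Pw (g : ftype L) n i : Prop := g (reqA n) -> g (reqW n i).
Definition w (g : ftype L) n : nat := least (Pw g n).

Definition Dis (g h : ftype L) n : Prop := ~ (g (enumf n) <-> h (enumf n)) \/ w g n <> w h n.

Definition dist (g h : ftype L) : R :=
  match excluded_middle_informative (exists n, Dis g h n) with
  | left _ => (/ INR (least (Dis g h)).+1)%R
  | right _ => 0%R
  end.

Lemma Pex g n : SG g -> exists i, Pw g n i.
Proof.
move=> [M [a [b [HM [Ea [Eb ->]]]]]].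
rewrite /Pw /reqA /reqW; case: (enumf n./2) => [t1 t2|r args|p|p q|m psi];
  try by exists 0; rewrite /tp2 /= => H; exfalso; apply: H.
case: (classic (tp2 M a b (fex m psi))) => [[x Hx]|H]; last by exists 0.
have [i Hi] : exists i, pairseq a b (i.*2 + odd n) = x.
  case: (odd n).
  - have [i Hi] := Eb x; exists i; by rewrite addn1 pairseq_odd.
  - have [i Hi] := Ea x; exists i; by rewrite addn0 pairseq_even.
exists i => _; rewrite /tp2 ren_spec; move: Hx; apply: sat_ext' => k; rewrite /upd.
by case: eqP.
Qed.

Lemma w_spec g n : SG g -> Pw g n (w g n) /\ forall j, j < w g n -> ~ Pw g n j.
Proof. move=> Sg; apply: least_spec; exact: Pex. Qed.

Lemma dist_none g h : (forall n, ~ Dis g h n) -> dist g h = 0%R.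
Proof. move=> H; rewrite /dist; case: excluded_middle_informative => // -[n Hn]; by case: (H n). Qed.

Lemma dist_some g h n : Dis g h n -> dist g h = (/ INR (least (Dis g h)).+1)%R.
Proof. move=> H; rewrite /dist; case: excluded_middle_informative => // -[]; by exists n. Qed.

Lemma dist_ge0 g h : (0 <= dist g h)%R.
Proof.
rewrite /dist; case: excluded_middle_informative => _; [left; exact: inv_pos | exact: Rle_refl].
Qed.

Lemma dist_ge g h n : Dis g h n -> (/ INR n.+1 <= dist g h)%R.
Proof. move=> H; rewrite (dist_some _ _ _ H); apply: inv_le; exact: least_le. Qed.

Lemma dist_lt g h K : (dist g h < / INR K.+1)%R <-> forall n, n <= K -> ~ Dis g h n.
Proof.
split.
- move=> H n Hn Hd; have := dist_ge _ _ _ Hd; have := inv_le _ _ Hn; move: H.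
  move=> H1 H2 H3; have := Rle_trans _ _ _ H2 H3; move/Rle_not_lt; by apply.
- move=> H; case: (classic (exists n, Dis g h n)) => [[n Hn]|Hn].
  + rewrite (dist_some _ _ _ Hn); apply: inv_lt.
    have [H1 _] := least_spec _ (ex_intro _ n Hn).
    rewrite ltnNge; apply/negP => Hle; exact: H _ Hle H1.
  + rewrite dist_none; [exact: inv_pos | move=> n Hd; apply: Hn; by exists n].
Qed.

Lemma Dis_sym g h n : Dis g h n <-> Dis h g n.
Proof.
rewrite /Dis; split=> -[H|H]; [left|right|left|right] => //; try (by move=> E0; apply: H; rewrite E0);
  by move=> H'; apply: H; apply: iff_sym.
Qed.

Lemma dist_sym g h : dist g h = dist h g.
Proof.
have E0 : Dis g h = Dis h g.
  apply: functional_extensionality => n; apply: propositional_extensionality; exact: Dis_sym.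
case: (classic (exists n, Dis g h n)) => [[n Hn]|Hn].
- rewrite (dist_some _ _ _ Hn); have Hn' : Dis h g n by apply/Dis_sym.
  by rewrite (dist_some _ _ _ Hn') E0.
- rewrite !dist_none // => n Hd; apply: Hn; exists n; [by apply/Dis_sym | done].
Qed.

Lemma Dis_tr g h k n : Dis g k n -> Dis g h n \/ Dis h k n.
Proof.
move=> H; case: (classic (Dis g h n)) => [|H1]; [by left | right].
case: (classic (Dis h k n)) => // H2; exfalso.
have A1 : (g (enumf n) <-> h (enumf n)) /\ w g n = w h n.
  split; [apply: NNPP => C; apply: H1; by left | apply: NNPP => C; apply: H1; by right].
have A2 : (h (enumf n) <-> k (enumf n)) /\ w h n = w k n.
  split; [apply: NNPP => C; apply: H2; by left | apply: NNPP => C; apply: H2; by right].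
case: H => [C|C]; apply: C; [rewrite A1.1 A2.1 // | by rewrite A1.2 A2.2].
Qed.

Lemma dist_tri g h k : (dist g k <= dist g h + dist h k)%R.
Proof.
case: (classic (exists n, Dis g k n)) => [[n Hn]|Hn].
- rewrite (dist_some _ _ _ Hn).
  have [H1 _] := least_spec (Dis g k) (ex_intro _ n Hn).
  case: (Dis_tr _ h _ _ H1) => H.
  + have X1 := dist_ge _ _ _ H; have X2 := dist_ge0 h k; lra.
  + have X1 := dist_ge _ _ _ H; have X2 := dist_ge0 g h; lra.
- rewrite dist_none; last by move=> n Hd; apply: Hn; exists n.
  have X1 := dist_ge0 g h; have X2 := dist_ge0 h k; lra.
Qed.

Lemma S_neg g phi : SG g -> (g (fneg phi) <-> ~ g phi).
Proof. by case=> M [a [b [_ [_ [_ ->]]]]]. Qed.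
Lemma S_and g p q : SG g -> (g (fand p q) <-> g p /\ g q).
Proof. by case=> M [a [b [_ [_ [_ ->]]]]]. Qed.
Lemma S_bigconj g F n : SG g -> (g (bigconj L F n) <-> forall i, i < n -> g (F i)).
Proof. case=> M [a [b [_ [_ [_ ->]]]]]; exact: sat_bigconj. Qed.

Definition imp (a b : formula L) : formula L := fneg (fand a (fneg b)).
Lemma S_imp g a b : SG g -> (g (imp a b) <-> (g a -> g b)).
Proof.
move=> Sg; rewrite /imp S_neg // S_and // S_neg //; split=> H.
- move=> Ha; apply: NNPP => Hb; by apply: H.
- by move=> [Ha Hb]; apply: Hb; apply: H.
Qed.

Lemma dist0 p q : SG p -> SG q -> (dist p q = 0%R <-> p = q).
Proof.
move=> Sp Sq; split=> [H|<-].
- have HD : forall n, ~ Dis p q n.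
    move=> n Hd; have := dist_ge _ _ _ Hd; rewrite H; have := inv_pos n; lra.
  apply: functional_extensionality => phi; apply: propositional_extensionality.
  rewrite -(Hcode phi); apply: NNPP => C; apply: (HD (code phi)); by left.
- apply: dist_none => n [H|H]; by apply: H.
Qed.

Lemma metric_ok : metric_on SG dist.
Proof.
split; first by move=> p q _ _; exact: dist_ge0.
split; first exact: dist0.
split; first by move=> p q _ _; exact: dist_sym.
by move=> p q r _ _ _; exact: dist_tri.
Qed.

Lemma lopen_metric U : lopen SG U -> metric_open SG dist U.
Proof.
move=> [HU1 HU2]; split=> // p Up; have [phi [Hp HQ]] := HU2 p Up.
exists (/ INR (code phi).+1)%R; split; first exact: inv_pos.
move=> q Sq Hd; apply: HQ => //.
have := (proj1 (dist_lt p q (code phi)) Hd) (code phi) (leqnn _).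
rewrite /Dis Hcode => H; apply: NNPP => C; apply: H; left => E0; apply: C; by apply/E0.
Qed.

Definition lit (p : ftype L) n : formula L :=
  if excluded_middle_informative (p (enumf n)) then enumf n else fneg (enumf n).
Definition wform n i : formula L :=
  fand (imp (reqA n) (reqW n i)) (bigconj L (fun j => fneg (imp (reqA n) (reqW n j))) i).

Lemma S_wform g n i : SG g -> (g (wform n i) <-> Pw g n i /\ forall j, j < i -> ~ Pw g n j).
Proof.
move=> Sg; rewrite /wform S_and // S_imp // S_bigconj //; split=> -[H1 H2]; split=> // j Hj.
- by move: (H2 j Hj); rewrite S_neg // S_imp.
- by rewrite S_neg // S_imp //; apply: H2.
Qed.

Lemma metric_lopen U : metric_open SG dist U -> lopen SG U.
Proof.
move=> [HU1 HU2]; split=> // p Up; have [e [He Hb]] := HU2 p Up.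
have Sp := HU1 p Up; have [K HK] := arch e He.
exists (bigconj L (fun n => fand (lit p n) (wform n (w p n))) K.+1); split.
- apply/S_bigconj => // n _; apply/S_and => //; split.
  + rewrite /lit; case: excluded_middle_informative => // H; by apply/S_neg.
  + apply/S_wform => //; exact: w_spec.
- move=> q Sq /S_bigconj -/(_ Sq) Hq; apply: Hb => //.
  apply: (Rlt_trans _ _ _ _ HK); apply/dist_lt => n Hn.
  have := Hq n Hn; rewrite S_and // S_wform // => -[Hl [Hw1 Hw2]].
  have Ew : w q n = w p n by apply: least_unique.
  move=> [C|C]; last by apply: C.
  apply: C; move: Hl; rewrite /lit; case: excluded_middle_informative => Hp.
  + by move=> Hq'; split.
  + rewrite S_neg // => Hq'; by split.
Qed.

Section Complete.
Variable x : nat -> ftype L.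
Hypothesis Sx : forall n, SG (x n).
Hypothesis Cx : cauchy dist x.

Lemma EC n : exists N, forall m m', N <= m -> N <= m' -> ~ Dis (x m) (x m') n.
Proof.
have [N HN] := Cx _ (inv_pos n); exists N => m m' Hm Hm'.
exact: (proj1 (dist_lt _ _ n) (HN m m' Hm Hm')) n (leqnn n).
Qed.

Definition lim : ftype L := fun phi => exists N, forall m, N <= m -> x m phi.

Lemma evf phi : exists N, (forall m, N <= m -> x m phi) \/ (forall m, N <= m -> ~ x m phi).
Proof.
have [N HN] := EC (code phi); exists N.
have Hag : forall m, N <= m -> (x N phi <-> x m phi).
  move=> m Hm; have := HN N m (leqnn N) Hm; rewrite /Dis Hcode => H.
  apply: NNPP => C; apply: H; by left.
case: (classic (x N phi)) => H; [left|right] => m Hm; [by apply/Hag | by rewrite -Hag].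
Qed.

Lemma notl phi : (exists N, forall m, N <= m -> ~ x m phi) -> ~ lim phi.
Proof.
move=> [N HN] [N' HN']; apply: (HN (maxn N N')); [exact: leq_maxl | apply: HN'; exact: leq_maxr].
Qed.

Lemma lfalse phi : ~ lim phi -> exists N, forall m, N <= m -> ~ x m phi.
Proof. move=> H; have [N [HN|HN]] := evf phi; [by case: H; exists N | by exists N]. Qed.

Lemma lim_and a b : lim (fand a b) <-> lim a /\ lim b.
Proof.
split.
- move=> [N HN]; split; exists N => m Hm; by have /(S_and _ _ _ (Sx m)) [] := HN m Hm.
- move=> [[N1 H1] [N2 H2]]; exists (maxn N1 N2) => m Hm; apply/S_and => //; split;
  [apply: H1 | apply: H2]; move: Hm; rewrite geq_max => /andP []//.
Qed.

Lemma lim_neg phi : lim (fneg phi) <-> ~ lim phi.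
Proof.
split.
- move=> [N HN]; apply: notl; exists N => m Hm; have := HN m Hm; by rewrite S_neg.
- move/lfalse => [N HN]; exists N => m Hm; rewrite S_neg //; exact: HN.
Qed.

Lemma lim_imp phi psi : (forall (M : structure L), is_model M T -> forall v : nat -> M,
   sat M v phi -> sat M v psi) -> lim phi -> lim psi.
Proof.
move=> H [N HN]; exists N => m Hm; have := HN m Hm.
have [M [a [b [HM [_ [_ ->]]]]]] := Sx m; exact: H.
Qed.

Lemma wconst n : exists N, forall m, N <= m -> w (x m) n = w (x N) n.
Proof.
have [N HN] := EC n; exists N => m Hm; have := HN m N Hm (leqnn N).
move=> H; apply: NNPP => C; apply: H; by right.
Qed.

Lemma lim_P n : Pw lim n (w (x (proj1_sig (constructive_indefinite_description _ (wconst n)))) n).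
Proof.
case: (constructive_indefinite_description _ _) => N HN /=.
move=> [Na HA]; exists (maxn N Na) => m Hm.
have Hm1 : N <= m by move: Hm; rewrite geq_max => /andP [].
have Hm2 : Na <= m by move: Hm; rewrite geq_max => /andP [].
have [Hw _] := w_spec _ n (Sx m); rewrite HN // in Hw; apply: Hw; exact: HA.
Qed.

Lemma lim_w n : w lim n = w (x (proj1_sig (constructive_indefinite_description _ (wconst n)))) n.
Proof.
apply: least_unique; first exact: lim_P.
case: (constructive_indefinite_description _ _) => N HN /= j Hj HP.
have Hn : forall m, N <= m -> x m (reqA n) /\ ~ x m (reqW n j).
  move=> m Hm; have [_ H2] := w_spec _ n (Sx m); rewrite HN // in H2.
  have := H2 j Hj; rewrite /Pw => C; split; [apply: NNPP => C1; apply: C => C2; by case: C1|].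
  by move=> C1; apply: C.
have : lim (reqW n j) by apply: HP; exists N => m Hm; exact: (Hn m Hm).1.
apply: notl; exists N => m Hm; exact: (Hn m Hm).2.
Qed.

Lemma agree_n n : exists N, forall m, N <= m -> ~ Dis (x m) lim n.
Proof.
have [N0 HN0] := wconst n; have [N1 HN1] := evf (enumf n).
exists (maxn N0 (maxn N1 (proj1_sig (constructive_indefinite_description _ (wconst n))))) => m Hm.
move: Hm; rewrite !geq_max => /andP [Hm0 /andP [Hm1 Hm2]].
move=> [C|C]; apply: C.
- case: HN1 => HN1.
  + split=> _; [by exists N1 | exact: HN1].
  + split=> H; [by case: (HN1 m Hm1) | by case: (notl _ (ex_intro _ N1 HN1))].
- rewrite lim_w; case: (constructive_indefinite_description _ _) => N HN /= in Hm2 *.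
  exact: HN.
Qed.

Lemma agree_upto K : exists N, forall m, N <= m -> forall n, n <= K -> ~ Dis (x m) lim n.
Proof.
elim: K => [|K [N HN]].
- have [N HN] := agree_n 0; exists N => m Hm n; rewrite leqn0 => /eqP ->; exact: HN.
- have [N' HN'] := agree_n K.+1; exists (maxn N N') => m; rewrite geq_max => /andP [H1 H2] n.
  rewrite leq_eqVlt => /orP [/eqP ->|Hn]; [exact: HN' | exact: HN].
Qed.

Lemma lim_S : SG lim.
Proof.
apply: (term_model_G0 L T lim HTs lim_neg lim_and lim_imp).
move=> m psi Hl.
have Hh : forall n, enumf (n./2) = fex m psi -> lim (reqW n (w lim n)).
  move=> n En; have := lim_P n; rewrite -lim_w; apply; by rewrite /reqA En.
split.
- exists (w lim (code (fex m psi)).*2).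
  have := Hh _ (etrans (f_equal enumf (half_dbl _)) (Hcode _)).
  by rewrite /reqW half_dbl Hcode odd_double addn0.
- exists (w lim (code (fex m psi)).*2.+1).
  have := Hh _ (etrans (f_equal enumf (half_dbl1 _)) (Hcode _)).
  by rewrite /reqW half_dbl1 Hcode odd_dbl1 addn1.
Qed.

Lemma lim_conv : converges_to dist x lim.
Proof.
move=> e He; have [K HK] := arch e He; have [N HN] := agree_upto K.
exists N => m Hm; apply: (Rlt_trans _ _ _ _ HK); apply/dist_lt; exact: HN.
Qed.

End Complete.

Lemma polish_S (s0 : ftype L) (Hs0 : SG s0) : polish SG.
Proof.
split.
- exists dist; split; first exact: metric_ok. split.
  + move=> U; split; [exact: lopen_metric | exact: metric_lopen].
  + move=> x Sx Cx; exists (lim x); split; [exact: (lim_S x Sx Cx) | exact: (lim_conv x Sx Cx)].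
- pose Pn := fun n q => SG q /\ (q (enumf n) \/ ~ exists q', SG q' /\ q' (enumf n)).
  pose s := fun n => epsilon (inhabits s0) (Pn n).
  have Hs : forall n, SG (s n) /\ (s n (enumf n) \/ ~ exists q', SG q' /\ q' (enumf n)).
    move=> n; apply: (epsilon_spec (inhabits s0) (Pn n)); case: (classic (exists q', SG q' /\ q' (enumf n))) => [[q' [H1 H2]]|H].
    + exists q'; split=> //; by left.
    + exists s0; split=> //; by right.
  exists s; split; first by move=> n; exact: (Hs n).1.
  move=> U [HU1 HU2] [p Up]; have [phi [Hp HQ]] := HU2 p Up.
  exists (code phi); apply: HQ; first exact: (Hs _).1.
  case: (Hs (code phi)).2; rewrite Hcode // => C; case: C; exists p; split => //; exact: HU1.
Qed.

End Metric.


Theorem lemma2p2 (L : language) (T : theory L)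
  (hL : countable_language L) (hT : complete_theory T) :
  exists (mul : ftype L -> ftype L -> ftype L) (inv : ftype L -> ftype L),
    (* composition: tp(a,b) . tp(b,c) = tp(a,c) *)
    (forall (M : structure L) (a b c : nat -> M), is_model M T ->
       enumeration a -> enumeration b -> enumeration c ->
       mul (tp2 M a b) (tp2 M b c) = tp2 M a c) /\
    (* inverse: tp(a,b)^{-1} = tp(b,a) *)
    (forall (M : structure L) (a b : nat -> M), is_model M T ->
       enumeration a -> enumeration b -> inv (tp2 M a b) = tp2 M b a) /\
    (* every composable pair is of the form (tp(a,b), tp(b,c)) *)
    (forall g h, composable (G0 T) mul inv g h ->
       exists (M : structure L) (a b c : nat -> M), is_model M T /\
         enumeration a /\ enumeration b /\ enumeration c /\
         g = tp2 M a b /\ h = tp2 M b c) /\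
    is_open_topological_groupoid (G0 T) (B0 T) mul inv /\
    polish (G0 T) /\
    (forall (M : structure L) (a b : nat -> M), is_model M T ->
       enumeration a -> enumeration b ->
       tgt mul inv (tp2 M a b) = tp2 M a a /\ src mul inv (tp2 M a b) = tp2 M b b).
Proof.
case: hL => [[ef Hef] [er Her]]; case: hT => [HTs [[M HM] _]].
have Hcode := enumf_code L ef er Hef Her.
exists (gmul L T), (ginv L T).
split; first exact: gmul_eq.
split; first exact: ginv_eq.
split; first exact: comp_rep.
split; first exact: open_grpd.
split.
- have [s0 Hs0] := ls_nonempty L T (enumf L ef er) (code L ef er) Hcode HTs M HM.
  exact: (polish_S L T (enumf L ef er) (code L ef er) Hcode HTs s0 Hs0).
- move=> M' a b HM' Ea Eb; split; [exact: tgt_tp2 | exact: src_tp2].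
Qed.
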